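(* The quotient $\boldsymbol{T}[X_1,\ldots,X_n]/\boldsymbol{E}(\boldsymbol{T}^n)_0$ is cancellative, i.e. whenever $x\cdot y=x\cdot z$ in it, either $x=0$ or $y=z$.
   Context: $\boldsymbol{T}=\mathbb{R}\cup\{-\infty\}$ with $a\oplus b=\max\{a,b\}$, $a\odot b=a+b$; its zero is $-\infty$. $\boldsymbol{T}[X_1,\ldots,X_n]$ is the semiring of tropical polynomials in $n$ variables. $\boldsymbol{E}(\boldsymbol{T}^n)_0=\{(f,g)\in\boldsymbol{T}[X_1,\ldots,X_n]^2\mid f(x)=g(x)\ \forall x\in\boldsymbol{T}^n\}$, a congruence; the quotient is the semiring of tropical polynomial functions on $\boldsymbol{T}^n$. *)

(* Defs.v *)
From Stdlib Require Import Reals.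
From mathcomp Require Import all_boot.

Set Implicit Arguments.
Unset Strict Implicit.
Unset Printing Implicit Defensive.

(* The tropical semiring T = R ∪ {-oo}: None is -oo (the tropical zero). *)
Definition trop := option R.

Definition tzero : trop := None.
Definition tone : trop := Some R0.

Definition tadd (a b : trop) : trop :=
  match a, b with
  | None, y => y
  | x, None => x
  | Some x, Some y => Some (Rmax x y)
  end.

Definition tmul (a b : trop) : trop :=
  match a, b with
  | Some x, Some y => Some (Rplus x y)
  | _, _ => None
  end.

Definition tpow (a : trop) (k : nat) : trop := iter k (tmul a) tone.

Definition tpoint (n : nat) := 'I_n -> trop.

(* A monomial c ⊙ X_1^{a_1} ⊙ ... ⊙ X_n^{a_n}: coefficient and exponent vector. *)
Definition tmono (n : nat) := (trop * ('I_n -> nat))%type.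

Definition tpoly (n : nat) := seq (tmono n).

Definition tpoly0 (n : nat) : tpoly n := [::].

Definition mono_eval n (m : tmono n) (x : tpoint n) : trop :=
  foldr (fun i acc => tmul (tpow (x i) (m.2 i)) acc) m.1 (enum 'I_n).

Definition tpoly_eval n (p : tpoly n) (x : tpoint n) : trop :=
  foldr (fun m acc => tadd (mono_eval m x) acc) tzero p.

Definition mono_mul n (m m' : tmono n) : tmono n :=
  (tmul m.1 m'.1, fun i => (m.2 i + m'.2 i)%N).

Definition tpoly_mul n (p q : tpoly n) : tpoly n :=
  [seq mono_mul m m' | m <- p, m' <- q].

(* the congruence E(T^n)_0: equality as functions on T^n *)
Definition tfun_eq n (f g : tpoly n) : Prop :=
  forall x : tpoint n, tpoly_eval f x = tpoly_eval g x.

(* Main.v *)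
Require Import Defs.
From Stdlib Require Import Reals.
From mathcomp Require Import all_boot.
From Stdlib Require Import Lra Classical.

Local Open Scope R_scope.

Ltac rmx := unfold Rmax in *; repeat match goal with
  | |- context [Rle_dec ?a ?b] => destruct (Rle_dec a b)
  | H : context [Rle_dec ?a ?b] |- _ => destruct (Rle_dec a b)
  end; try lra.

Definition tle (a b : trop) : Prop :=
  match a, b with
  | None, _ => True
  | Some _, None => False
  | Some x, Some y => x <= y
  end.

Lemma tle_refl a : tle a a.
Proof. case: a => //= r; lra. Qed.

Lemma tle_trans a b c : tle a b -> tle b c -> tle a c.
Proof. case: a; case: b; case: c => //= *; lra. Qed.

Lemma tmul_mono a a' b b' : tle a a' -> tle b b' -> tle (tmul a b) (tmul a' b').
Proof. case: a; case: a'; case: b; case: b' => //= *; lra. Qed.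

Lemma tmulC a b : tmul a b = tmul b a.
Proof. case: a; case: b => //= *; f_equal; lra. Qed.

Lemma tmulA a b c : tmul a (tmul b c) = tmul (tmul a b) c.
Proof. case: a; case: b; case: c => //= *; f_equal; lra. Qed.

Lemma tmul0r a : tmul a None = None.
Proof. by case: a. Qed.

Lemma taddA a b c : tadd a (tadd b c) = tadd (tadd a b) c.
Proof. case: a; case: b; case: c => //= *; f_equal; rmx. Qed.

Lemma tmulDr a b c : tmul a (tadd b c) = tadd (tmul a b) (tmul a c).
Proof. case: a; case: b; case: c => //= *; f_equal; rmx. Qed.

Lemma tmulDl a b c : tmul (tadd b c) a = tadd (tmul b a) (tmul c a).
Proof. case: a; case: b; case: c => //= *; f_equal; rmx. Qed.

Lemma tadd_ubl a b : tle a (tadd a b).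
Proof. case: a; case: b => //= *; rmx. Qed.

Lemma tadd_ubr a b : tle b (tadd a b).
Proof. case: a; case: b => //= *; rmx. Qed.

Lemma tadd_le a b c : tle a c -> tle b c -> tle (tadd a b) c.
Proof. case: a; case: b; case: c => //= *; rmx. Qed.

Lemma tadd_mono a a' b b' : tle a a' -> tle b b' -> tle (tadd a b) (tadd a' b').
Proof.
move=> h1 h2; apply: tadd_le.
  exact: tle_trans h1 (tadd_ubl _ _).
exact: tle_trans h2 (tadd_ubr _ _).
Qed.

Lemma tpowS a k : tpow a k.+1 = tmul a (tpow a k).
Proof. by []. Qed.

Lemma tpow_mono a b k : tle a b -> tle (tpow a k) (tpow b k).
Proof.
move=> h; elim: k => [|k IH]; first exact: tle_refl.
rewrite !tpowS; exact: tmul_mono.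
Qed.

Lemma tpowD a j k : tpow a (j + k) = tmul (tpow a j) (tpow a k).
Proof.
elim: j => [|j IH].
  rewrite add0n; change (tpow a 0) with tone.
  case: (tpow a k) => [r|] //=; rewrite /tone /=; f_equal; lra.
by rewrite addSn !tpowS IH tmulA.
Qed.

Lemma tpow_some r k : tpow (Some r) k = Some (INR k * r).
Proof.
elim: k => [|k IH]; first by rewrite /tpow /= Rmult_0_l.
rewrite tpowS IH S_INR /=; f_equal; lra.
Qed.

Section Poly.
Variable n : nat.

Definition Fm (c : trop) (a : 'I_n -> nat) (l : seq 'I_n) (y : tpoint n) : trop :=
  foldr (fun i acc => tmul (tpow (y i) (a i)) acc) c l.

Lemma mono_evalE (m : tmono n) y : mono_eval m y = Fm m.1 m.2 (enum 'I_n) y.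
Proof. by []. Qed.

Lemma Fm_mul c c' a a' l y :
  Fm (tmul c c') (fun i => (a i + a' i)%N) l y = tmul (Fm c a l y) (Fm c' a' l y).
Proof.
elim: l => [|i l IH] //=; rewrite IH tpowD.
set A := tpow _ (a i); set B := tpow _ (a' i); set C := Fm c a l y; set D := Fm c' a' l y.
rewrite -!tmulA; congr tmul; rewrite !tmulA; congr tmul; exact: tmulC.
Qed.

Lemma mono_mulE (m m' : tmono n) y :
  mono_eval (mono_mul m m') y = tmul (mono_eval m y) (mono_eval m' y).
Proof. by rewrite !mono_evalE Fm_mul. Qed.

Lemma eval_cat (p q : tpoly n) y :
  tpoly_eval (p ++ q) y = tadd (tpoly_eval p y) (tpoly_eval q y).
Proof. by elim: p => [|m p IH] //=; rewrite IH taddA. Qed.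

Lemma eval_map m (q : tpoly n) y :
  tpoly_eval [seq mono_mul m m' | m' <- q] y = tmul (mono_eval m y) (tpoly_eval q y).
Proof.
elim: q => [|m' q IH] /=; first by rewrite tmul0r.
by rewrite IH mono_mulE tmulDr.
Qed.

Lemma eval_mul (p q : tpoly n) y :
  tpoly_eval (tpoly_mul p q) y = tmul (tpoly_eval p y) (tpoly_eval q y).
Proof.
rewrite /tpoly_mul; elim: p => [|m p IH] //=.
by rewrite eval_cat eval_map IH tmulDl.
Qed.

Definition xs (x : tpoint n) (s : R) : tpoint n :=
  fun i => match x i with Some r => Some r | None => Some s end.

Definition okb (x : tpoint n) (a : 'I_n -> nat) (i : 'I_n) : bool :=
  isSome (x i) || (a i == 0)%N.

Lemma Fm_cons c a i l y : Fm c a (i :: l) y = tmul (tpow (y i) (a i)) (Fm c a l y).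
Proof. by []. Qed.

Lemma Fm_mono c a l y y' : (forall i, tle (y i) (y' i)) -> tle (Fm c a l y) (Fm c a l y').
Proof.
move=> h; elim: l => [|i l IH] /=; first exact: tle_refl.
apply: tmul_mono => //; exact: tpow_mono.
Qed.

Lemma Fm_ok c a l x s : all (okb x a) l -> Fm c a l x = Fm c a l (xs x s).
Proof.
elim: l => [|i l IH] //= /andP [hi hl]; rewrite IH //; congr tmul.
rewrite /xs; move: hi; rewrite /okb; case: (x i) => //= /eqP ->; done.
Qed.

Lemma Fm_nok c a l x : ~~ all (okb x a) l -> Fm c a l x = None.
Proof.
elim: l => [|i l IH] //=; rewrite negb_and => /orP [hi|hl].
  move: hi; rewrite /okb negb_or; case: (x i) => //= /eqP.
  by case: (a i).
by rewrite IH // tmul0r.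
Qed.

Lemma xs_mono x s t : s <= t -> forall i, tle (xs x s i) (xs x t i).
Proof. by move=> h i; rewrite /xs; case: (x i) => //= r; lra. Qed.

Lemma Fm_nok_bound c a l x s : s <= 0 -> ~~ all (okb x a) l ->
  tle (Fm c a l (xs x s)) (tmul (Some s) (Fm c a l (xs x 0))).
Proof.
move=> hs; elim: l => [|i l IH] //; rewrite !Fm_cons [all _ _]/= negb_and => /orP [hi|hl].
  have hm := Fm_mono c a l _ _ (xs_mono x s 0 hs).
  move: hi; rewrite /okb negb_or => /andP [h1 h2].
  case Ex: (x i) h1 => [r|] // _.
  have -> : xs x s i = Some s by rewrite /xs Ex.
  have -> : xs x 0 i = Some 0 by rewrite /xs Ex.
  case E: (a i) h2 => [|k] // _.
  rewrite tmulA; apply: tmul_mono => //.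
  rewrite !tpowS !tpow_some /=; have := pos_INR k; nra.
rewrite [tmul (Some s) _]tmulA [tmul (Some s) _]tmulC -tmulA.
apply: tmul_mono; [exact: tpow_mono (xs_mono x s 0 hs i) | exact: IH].
Qed.

Lemma mono_lower (m : tmono n) x s : tle (mono_eval m x) (mono_eval m (xs x s)).
Proof.
rewrite !mono_evalE; case h: (all (okb x m.2) (enum 'I_n)).
  rewrite -Fm_ok //; exact: tle_refl.
by rewrite Fm_nok ?h.
Qed.

Lemma eval_lower (p : tpoly n) x s : tle (tpoly_eval p x) (tpoly_eval p (xs x s)).
Proof.
elim: p => [|m p IH] //=; apply: tadd_mono => //; exact: mono_lower.
Qed.

Lemma eval_upper (p : tpoly n) x M : exists s0, s0 <= 0 /\ forall s, s <= s0 ->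
  tle (tpoly_eval p (xs x s)) (tadd (tpoly_eval p x) (Some M)).
Proof.
elim: p => [|m p [s1 [hs1 IH]]].
  by exists 0; split => //; lra.
rewrite [tpoly_eval (m :: p) _]/=.
case h: (all (okb x m.2) (enum 'I_n)).
  exists s1; split => // s hs /=.
  rewrite -taddA; apply: tadd_mono; last exact: IH.
  rewrite !mono_evalE -Fm_ok //; exact: tle_refl.
have hn : ~~ all (okb x m.2) (enum 'I_n) by rewrite h.
rewrite [mono_eval m x]mono_evalE Fm_nok //.
case E: (Fm m.1 m.2 (enum 'I_n) (xs x 0)) => [b|].
  exists (Rmin s1 (M - b)); split; first by have := Rmin_l s1 (M - b); lra.
  move=> s hs /=; apply: tadd_le; last first.
    apply: IH; have := Rmin_l s1 (M - b); lra.
  have hs0 : s <= 0 by have := Rmin_l s1 (M - b); lra.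
  rewrite mono_evalE; apply: (tle_trans _ _ _ (Fm_nok_bound _ _ _ _ _ hs0 hn)).
  apply: (tle_trans _ (Some M)); last exact: tadd_ubr.
  rewrite E /=; have := Rmin_r s1 (M - b); lra.
exists s1; split => // s hs /=; apply: tadd_le; last exact: IH.
have hs0 : s <= 0 by lra.
have := Fm_nok_bound m.1 m.2 (enum 'I_n) x s hs0 hn.
by rewrite mono_evalE E tmul0r; case: (Fm _ _ _ _).
Qed.

Lemma Fm_c c a l y : Fm c a l y <> None -> c <> None.
Proof.
elim: l => [|i l IH] // h; apply: IH => h2; apply: h; by rewrite Fm_cons h2 tmul0r.
Qed.

Lemma Fm_fin c a l y : (forall i, y i <> None) -> c <> None -> Fm c a l y <> None.
Proof.
move=> hy hc; elim: l => [|i l IH] //; rewrite Fm_cons.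
case E: (y i) => [r|]; last by have := hy i; rewrite E.
rewrite tpow_some; case: (Fm c a l y) IH => //.
Qed.

Lemma eval_fin (p : tpoly n) x0 y : tpoly_eval p x0 <> None ->
  (forall i, y i <> None) -> tpoly_eval p y <> None.
Proof.
move=> h hy; elim: p h => [|m p IH] //= h.
case E: (mono_eval m x0) h => [r|] /= h.
  have : mono_eval m y <> None.
    rewrite mono_evalE; apply: Fm_fin => //; apply: (Fm_c _ m.2 (enum 'I_n) x0).
    by rewrite -mono_evalE E.
  by case: (mono_eval m y); case: (tpoly_eval p y).
have := IH h; by case: (mono_eval m y); case: (tpoly_eval p y).
Qed.

Lemma xs_fin x s i : xs x s i <> None.
Proof. by rewrite /xs; case: (x i). Qed.

End Poly.
Arguments xs {n}.
Arguments eval_upper {n}.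
Arguments eval_lower {n}.
Arguments eval_fin {n}.
Arguments xs_fin {n}.
Arguments eval_mul {n}.

Lemma tmul_cancel a b c : a <> None -> tmul a b = tmul a c -> b = c.
Proof.
case: a => [r|] // _; case: b; case: c => //= u v [] h; f_equal; lra.
Qed.

Theorem lemma3p1 (n : nat) (f g h : tpoly n) :
  tfun_eq (tpoly_mul f g) (tpoly_mul f h) ->
  tfun_eq f (tpoly0 n) \/ tfun_eq g h.
Proof.
move=> H.
case: (classic (tfun_eq f (tpoly0 n))) => Hf; [by left | right].
have [x0 hx0] : exists x0, tpoly_eval f x0 <> None.
  apply: NNPP => hc; apply: Hf => x; apply: NNPP => hx; apply: hc; by exists x.
have fin : forall x s, tpoly_eval g (xs x s) = tpoly_eval h (xs x s).
  move=> x s; apply: (tmul_cancel (tpoly_eval f (xs x s))).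
    apply: (eval_fin _ x0) => //; exact: xs_fin.
  by rewrite -!eval_mul H.
move=> x.
have [M [hMA hMB]] : exists M, (forall a, tpoly_eval g x = Some a -> M < a) /\
    (forall b, tpoly_eval h x = Some b -> M < b).
  case: (tpoly_eval g x) => [a|]; case: (tpoly_eval h x) => [b|];
    [exists (Rmin a b - 1) | exists (a - 1) | exists (b - 1) | exists 0];
    split => c Ec; try discriminate; injection Ec as <-;
    try have := Rmin_l a b; try have := Rmin_r a b; lra.
have [s1 [_ h1]] := eval_upper g x M.
have [s2 [_ h2]] := eval_upper h x M.
pose s := Rmin s1 s2.
have u1 := h1 s (Rmin_l s1 s2).
have u2 := h2 s (Rmin_r s1 s2).
have l1 := eval_lower g x s.
have l2 := eval_lower h x s.
rewrite -fin in u2 l2.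
move: u1 l1 u2 l2 hMA hMB.
case: (tpoly_eval g (xs x s)) => [w|]; case: (tpoly_eval g x) => [a|];
  case: (tpoly_eval h x) => [b|] //= u1 l1 u2 l2 hA hB;
  try have := hA _ erefl; try have := hB _ erefl; intros; try f_equal; rmx.
Qed.
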